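(* Fix a positive integer $n$ and two partitions $\Lambda_w$ and $\Lambda_b$ of $n$. Then $$\sum_{T\in\mathbf{W}_{\Lambda_w,\Lambda_b}}\varepsilon(T)-\sum_{T\in\mathbf{B}_{\Lambda_w,\Lambda_b}}\varepsilon(T)=\sum_{T\in\mathbf{W}_{\Lambda_w,\Lambda_b}}\omega(T)-\sum_{T\in\mathbf{B}_{\Lambda_w,\Lambda_b}}\omega(T).$$
   Context: A black and white tree is a finite tree embedded in $\mathbb{C}$ whose vertices are colored black and white so that adjacent vertices have different colors. It is real if it is invariant (including colors) under complex conjugation. Two real trees are isomorphic if one is carried to the other by a homeomorphism of $\mathbb{C}$ commuting with complex conjugation and preserving the orientation of the real axis (and the colors); trees are considered up to isomorphism. The real vertices of a real tree $T$ are its vertices on $\mathbb{R}$; the real part sequence of $T$ is the sequence of (color, degree) of the real vertices from left to right; the first and last real vertices are the border vertices. A disorder of $T$ is a pair of real vertices of the same color such that the left one has strictly greater degree than the right one; $\varepsilon(T)=(-1)^d$ with $d$ the number of disorders. The weight $\omega(T)$: if the real part sequence is not symmetric (not a palindrome), $\omega(T)=0$; if $T$ has only one real vertex, $\omega(T)=1$; if the real part sequence is symmetric, $T$ has more than one real vertex and the middle real vertex has the same color as the border vertices, $\omega(T)=-1$; if it is symmetric, with more than one real vertex, and the middle real vertex has a different color from the border vertices, $\omega(T)=1$. $T$ is white side (resp. black side) if its rightmost real vertex is white (resp. black). $\mathbf{W}_{\Lambda_w,\Lambda_b}$ (resp. $\mathbf{B}_{\Lambda_w,\Lambda_b}$)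 is the set of isomorphism classes of white side (resp. black side) real trees with white vertex degrees $\Lambda_w$ and black vertex degrees $\Lambda_b$. *)

(* Defs.v *)
From HB Require Import structures.
From mathcomp Require Import all_boot all_order all_algebra.
Set Implicit Arguments. Unset Strict Implicit. Unset Printing Implicit Defensive.
Import GRing.Theory Num.Theory.

(* Plane (ordered, rooted) trees.  A real tree is encoded by its real   *)
(* vertices (a path on R, left to right) together with, for each real   *)
(* vertex, the ordered list (counterclockwise, from the right real      *)
(* direction to the left one) of plane trees hanging in the upper half  *)
(* plane; the lower half plane part is the mirror image.  Up to         *)
(* isomorphism (homeomorphism of C commuting with conjugation and       *)
(* preserving the orientation of R and the colours) this encoding is    *)
(* a bijection onto the real trees.                                      *)

Inductive ptree := PNode of seq ptree.

Fixpoint ptree_enc (t : ptree) : GenTree.tree unit :=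
  let: PNode ts := t in GenTree.Node 0 (map ptree_enc ts).

Fixpoint ptree_dec (g : GenTree.tree unit) : ptree :=
  match g with
  | GenTree.Leaf _ => PNode [::]
  | GenTree.Node _ gs => PNode (map ptree_dec gs)
  end.

Fixpoint ptree_encK_aux (t : ptree) : ptree_dec (ptree_enc t) = t :=
  match t return ptree_dec (ptree_enc t) = t with
  | PNode ts =>
    f_equal PNode
      ((fix aux (l : seq ptree) : map ptree_dec (map ptree_enc l) = l :=
          match l return map ptree_dec (map ptree_enc l) = l with
          | [::] => erefl
          | t :: l' => f_equal2 cons (ptree_encK_aux t) (aux l')
          end) ts)
  end.

Lemma ptree_encK : cancel ptree_enc ptree_dec.
Proof. exact: ptree_encK_aux. Qed.

HB.instance Definition _ := Countable.copy ptree (can_type ptree_encK).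

(* Colours: true = white, false = black. *)

(* (colour, degree) of the vertices of an upper tree t whose root has    *)
(* colour c (the root is joined to its parent by one edge).             *)
Fixpoint up_verts (c : bool) (t : ptree) : seq (bool * nat) :=
  let: PNode ts := t in
  (c, (size ts).+1) :: flatten (map (up_verts (~~ c)) ts).

(* A real tree: (colour of the leftmost real vertex,
                 upper forests of the real vertices from left to right). *)
Definition rtree := (bool * seq (seq ptree))%type.

Definition valid_rtree (T : rtree) : bool := 0 < size T.2.

Definition nreal (T : rtree) : nat := size T.2.

Definition real_col (T : rtree) (i : nat) : bool := T.1 (+) odd i.

Definition real_deg (T : rtree) (i : nat) : nat :=
  (0 < i) + (i.+1 < nreal T) + 2 * size (nth [::] T.2 i).

Definition real_part (T : rtree) : seq (bool * nat) :=
  [seq (real_col T i, real_deg T i) | i <- iota 0 (nreal T)].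

(* all (colour, degree) of the non-real vertices; each upper vertex      *)
(* appears together with its complex conjugate                            *)
Definition nonreal_verts (T : rtree) : seq (bool * nat) :=
  let up := flatten [seq flatten (map (up_verts (~~ real_col T i))
                                      (nth [::] T.2 i))
                    | i <- iota 0 (nreal T)] in
  up ++ up.

Definition all_verts (T : rtree) : seq (bool * nat) :=
  real_part T ++ nonreal_verts T.

Definition degs_of (col : bool) (T : rtree) : seq nat :=
  [seq v.2 | v <- all_verts T & v.1 == col].

Definition white_side (T : rtree) : bool := real_col T (nreal T).-1.

Definition is_partition (n : nat) (l : seq nat) : bool :=
  [&& sorted geq l, all (fun x => 0 < x) l & sumn l == n].

Definition inW (Lw Lb : seq nat) (T : rtree) : bool :=
  [&& valid_rtree T, white_side T,
      perm_eq (degs_of true T) Lw & perm_eq (degs_of false T) Lb].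

Definition inB (Lw Lb : seq nat) (T : rtree) : bool :=
  [&& valid_rtree T, ~~ white_side T,
      perm_eq (degs_of true T) Lw & perm_eq (degs_of false T) Lb].

Definition enumerates (s : seq rtree) (P : rtree -> bool) : Prop :=
  uniq s /\ forall T, (T \in s) = P T.

Definition disorders (T : rtree) : nat :=
  let s := real_part T in
  \sum_(0 <= i < size s) \sum_(i.+1 <= j < size s)
     (((nth (false, 0) s i).1 == (nth (false, 0) s j).1)
      && ((nth (false, 0) s j).2 < (nth (false, 0) s i).2)).

Local Open Scope ring_scope.
Definition eps (T : rtree) : int := (-1) ^+ disorders T.

Definition omega (T : rtree) : int :=
  let s := real_part T in
  if rev s != s then 0
  else if (nreal T == 1)%N then 1
  else if real_col T (nreal T)./2 == real_col T 0 then -1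
  else 1.

(* Main.v *)
Require Import Defs.
From mathcomp Require Import all_boot all_order all_algebra.
From mathcomp Require Import zify ring lra.
Set Implicit Arguments. Unset Strict Implicit. Unset Printing Implicit Defensive.
Import GRing.Theory Num.Theory.

Definition Dseq (s : seq (bool * nat)) : nat :=
  \sum_(0 <= i < size s) \sum_(i.+1 <= j < size s)
     (((nth (false, 0) s i).1 == (nth (false, 0) s j).1)
      && ((nth (false, 0) s j).2 < (nth (false, 0) s i).2)).

Lemma disordersE T : disorders T = Dseq (real_part T).
Proof. by []. Qed.

Definition cnt (x : bool * nat) s := count (fun y => (x.1 == y.1) && (y.2 < x.2)) s.
Definition cntR (x : bool * nat) s := count (fun y => (y.1 == x.1) && (x.2 < y.2)) s.

Lemma sum_count_seq (T : Type) (P : pred T) (s : seq T) :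
  \sum_(i <- s) (P i : nat) = count P s.
Proof. by elim: s => [|a s IH]; rewrite ?big_nil ?big_cons ?IH. Qed.

Lemma sum_nth_count (T : Type) x0 (P : pred T) (s : seq T) :
  \sum_(0 <= j < size s) (P (nth x0 s j) : nat) = count P s.
Proof. by rewrite -sum_count_seq (big_nth x0). Qed.

Lemma Dseq_cons x s : Dseq (x :: s) = cnt x s + Dseq s.
Proof.
rewrite /Dseq /= big_ltn // big_add1 /=.
congr (_ + _).
  by rewrite (sum_nth_count (false,0) (fun y => (x.1 == y.1) && (y.2 < x.2))).
rewrite big_add1 /=; apply: eq_bigr => i _; by rewrite big_add1.
Qed.

Lemma Dseq_nil : Dseq [::] = 0.
Proof. by rewrite /Dseq big_geq. Qed.

Lemma Dseq_cat a s : Dseq (a ++ s) = Dseq a + Dseq s + \sum_(x <- a) cnt x s.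
Proof.
elim: a => [|x a IH]; first by rewrite Dseq_nil big_nil add0n addn0.
by rewrite cat_cons !Dseq_cons IH big_cons /cnt count_cat -/(cnt x a) -/(cnt x s); lia.
Qed.

Lemma Dseq_rcons s y : Dseq (rcons s y) = Dseq s + cntR y s.
Proof.
elim: s => [|x s IH]; first by rewrite /= Dseq_cons Dseq_nil.
rewrite rcons_cons !Dseq_cons IH /cnt /cntR -cats1 count_cat /= -/(cntR y s).
rewrite -/(cnt x s); case: (x.1 == y.1) (y.1 == x.1) (eq_sym x.1 y.1) => [] [] //= _; lia.
Qed.

Lemma cnt_perm x s t : perm_eq s t -> cnt x s = cnt x t.
Proof. by move/permP => H; rewrite /cnt H. Qed.
Lemma cntR_perm x s t : perm_eq s t -> cntR x s = cntR x t.
Proof. by move/permP => H; rewrite /cntR H. Qed.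

Lemma cross_perm a s t : perm_eq s t ->
  \sum_(x <- a) cnt x s = \sum_(x <- a) cnt x t.
Proof. by move=> H; apply: eq_bigr => x _; apply: cnt_perm. Qed.
Definition vtx := (bool * nat * seq ptree)%type.
Definition vl (T : rtree) : seq vtx :=
  [seq (real_col T i, (0 < i) + (i.+1 < nreal T), nth [::] T.2 i) | i <- iota 0 (nreal T)].
Definition rp (v : vtx) : bool * nat := (v.1.1, v.1.2 + 2 * size v.2).
Arguments rp v /.
Definition nv (v : vtx) := flatten (map (up_verts (~~ v.1.1)) v.2).

Lemma real_partE T : real_part T = map rp (vl T).
Proof. by rewrite /real_part -map_comp. Qed.

Lemma nonrealE T : nonreal_verts T = flatten (map nv (vl T)) ++ flatten (map nv (vl T)).
Proof. by rewrite /nonreal_verts -map_comp. Qed.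

Lemma all_vertsE T : all_verts T = map rp (vl T) ++ (flatten (map nv (vl T)) ++ flatten (map nv (vl T))).
Proof. by rewrite /all_verts real_partE nonrealE. Qed.

Lemma perm_vl_all T T' : perm_eq (vl T) (vl T') -> perm_eq (all_verts T) (all_verts T').
Proof.
move=> H; rewrite !all_vertsE; apply: perm_cat; first exact: perm_map.
by have H2 := perm_flatten (perm_map nv H); apply: perm_cat.
Qed.

Lemma perm_vl_degs col T T' : perm_eq (vl T) (vl T') -> perm_eq (degs_of col T) (degs_of col T').
Proof. by move=> H; rewrite /degs_of; apply/perm_map/perm_filter/perm_vl_all. Qed.

Fixpoint vmid (c : bool) (l : seq (seq ptree)) : seq vtx :=
  if l is x :: r then (c, 2, x) :: vmid (~~ c) r else [::].

Lemma vmidE c l : vmid c l = [seq (c (+) odd i, 2, nth [::] l i) | i <- iota 0 (size l)].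
Proof.
elim: l c => [|x l IH] c //=.
rewrite addbF IH (iotaDl 1 0) -map_comp; congr (_ :: _); apply: eq_map => i /=.
by rewrite add0n; case: c; case: (odd i).
Qed.

Lemma vl_split c f0 mid fl :
  vl (c, f0 :: rcons mid fl) =
  (c, 1, f0) :: rcons (vmid (~~ c) mid) (c (+) odd (size mid).+1, 1, fl).
Proof.
rewrite /vl /nreal /= size_rcons.
have -> : iota 1 (size mid).+1 = rcons (iota 1 (size mid)) (size mid).+1.
  by rewrite -cats1 -(addn1 (size mid)) iotaD add1n addn1.
rewrite map_rcons /real_col /= addbF; congr (_ :: _).
congr rcons; last first.
  by rewrite ltnn addn0 nth_rcons ltnn eqxx.
rewrite vmidE (iotaDl 1 0) -map_comp; apply/eq_in_map => i /=.
rewrite mem_iota add0n add1n => /andP [_ Hi].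
rewrite add0n nth_rcons Hi add1n !ltnS Hi.
by case: c; case: (odd i).
Qed.

Lemma vl_one c f : vl (c, [:: f]) = [:: (c, 0, f)].
Proof. by rewrite /vl /= /real_col /= addbF. Qed.

Definition rpv c l := map rp (vmid c l).

Lemma perm_cons2 (T : eqType) (a b : T) s t : perm_eq s t -> perm_eq (a :: b :: s) (b :: a :: t).
Proof. by move/permP => H; apply/permP => p; rewrite /= H; lia. Qed.

Lemma perm_cons2' (T : eqType) (a b : T) s t : perm_eq s t -> perm_eq (a :: b :: s) (a :: b :: t).
Proof. by move/permP => H; apply/permP => p; rewrite /= H. Qed.

Lemma eqbN (c : bool) : (c == ~~ c) = false. Proof. by case: c. Qed.
Lemma eqNb (c : bool) : (~~ c == c) = false. Proof. by case: c. Qed.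

Lemma Dseq_swap01 a b s : a.1 != b.1 -> Dseq (a :: b :: s) = Dseq (b :: a :: s).
Proof.
move=> H; rewrite !Dseq_cons /cnt /= (negbTE H) eq_sym (negbTE H) /=; lia.
Qed.

Lemma Dseq_swap3 a b c' s : a.1 = c'.1 -> b.1 != a.1 ->
  Dseq (a :: b :: c' :: s) + (a.2 < c'.2) = Dseq (c' :: b :: a :: s) + (c'.2 < a.2).
Proof.
move=> Hac Hb; rewrite !Dseq_cons /cnt /= -!Hac eqxx.
rewrite (negbTE Hb) eq_sym (negbTE Hb) /=; lia.
Qed.

Lemma Dseq_perm_tail a s t : perm_eq s t -> Dseq s = Dseq t -> Dseq (a ++ s) = Dseq (a ++ t).
Proof. by move=> Hp HD; rewrite !Dseq_cat HD (cross_perm a Hp). Qed.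

Fixpoint sw (l : seq (seq ptree)) : seq (seq ptree) :=
  match l with x :: y :: r => y :: x :: sw r | _ => l end.

Lemma seq_ind2 (X : Type) (P : seq X -> Prop) :
  P [::] -> (forall x, P [:: x]) -> (forall x y r, P r -> P (x :: y :: r)) -> forall l, P l.
Proof.
move=> H0 H1 H2 l; have [n Hn] : exists n, size l <= n by exists (size l).
elim: n l Hn => [|n IH] [|x [|y r]] //= Hn; apply: H2; apply: IH; lia.
Qed.

Lemma size_sw l : size (sw l) = size l.
Proof. by elim/seq_ind2: l => //= x y r ->. Qed.

Lemma perm_sw c l : ~~ odd (size l) -> perm_eq (vmid c (sw l)) (vmid (~~ c) l).
Proof.
elim/seq_ind2: l c => [|x|x y r IH] c //=; rewrite negbK => Hr.
by rewrite negbK; apply: perm_cons2; apply: IH.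
Qed.

Lemma Dseq_sw c l : ~~ odd (size l) -> Dseq (rpv c (sw l)) = Dseq (rpv (~~ c) l).
Proof.
elim/seq_ind2: l c => [|x|x y r IH] c //=; rewrite negbK => Hr.
rewrite /rpv /= negbK Dseq_swap01 /=; last by rewrite eqbN.
apply: (Dseq_perm_tail [:: _; _]); last exact: IH.
by apply: perm_map; apply: perm_sw.
Qed.

Lemma seq_ind4 (X : Type) (P : seq X -> Prop) :
  P [::] -> (forall x, P [:: x]) -> (forall x y, P [:: x; y]) -> (forall x y z, P [:: x; y; z]) ->
  (forall a b c d r, P r -> P (a :: b :: c :: d :: r)) -> forall l, P l.
Proof.
move=> H0 H1 H2 H3 H4 l; have [n Hn] : exists n, size l <= n by exists (size l).
elim: n l Hn => [|n IH] [|x [|y [|z [|w r]]]] //= Hn; apply: H4; apply: IH; lia.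
Qed.

Fixpoint dsw (l : seq (seq ptree)) : seq (seq ptree) :=
  match l with
  | x0 :: x1 :: x2 :: x3 :: r =>
      if size x0 != size x2 then x2 :: x1 :: x0 :: x3 :: r
      else if size x1 != size x3 then x0 :: x3 :: x2 :: x1 :: r
      else x0 :: x1 :: x2 :: x3 :: dsw r
  | [:: x0; x1; x2] => if size x0 != size x2 then [:: x2; x1; x0] else l
  | _ => l
  end.

Lemma size_dsw l : size (dsw l) = size l.
Proof.
elim/seq_ind4: l => //= [x y z|a b c d r IH]; first by case: ifP.
by case: ifP => _ //; case: ifP => _ //=; rewrite IH.
Qed.

Lemma dswK l : dsw (dsw l) = l.
Proof.
elim/seq_ind4: l => //= [x y z|a b c d r IH].
  by case: ifP => H //=; rewrite ?H // eq_sym H.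
case: ifP => H1 /=; first by rewrite eq_sym H1.
case: ifP => H2 /=; first by rewrite H1 eq_sym H2.
by rewrite H1 H2 IH.
Qed.

Lemma perm_dsw c l : perm_eq (vmid c (dsw l)) (vmid c l).
Proof.
elim/seq_ind4: l c => //= [x y z|a b c' d r IH] c.
  by case: ifP => _ //=; apply/permP => p /=; rewrite ?negbK; lia.
case: ifP => _ /=; first by apply/permP => p /=; rewrite ?negbK; lia.
case: ifP => _ /=; first by apply/permP => p /=; rewrite ?negbK; lia.
by rewrite !negbK; move/permP: (IH c) => H; apply/permP => p /=; rewrite H.
Qed.

Lemma size_neq_neq (x y : seq ptree) : size x != size y -> (x == y) = false.
Proof. by move=> H; apply/eqP => E; move: H; rewrite E eqxx. Qed.

Lemma odd_flip x y (b1 b2 : bool) : x + b1 = y + b2 -> b1 = ~~ b2 -> odd x = ~~ odd y.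
Proof. by move=> E Hb; move: (congr1 odd E); rewrite !oddD Hb; clear; case: b2; case: (odd x); case: (odd y). Qed.

Lemma Dseq_cat4 a1 a2 a3 a4 s : Dseq [:: a1, a2, a3, a4 & s] =
  Dseq [:: a1; a2; a3; a4] + Dseq s + \sum_(x <- [:: a1; a2; a3; a4]) cnt x s.
Proof. exact: (Dseq_cat [:: a1; a2; a3; a4] s). Qed.

Lemma Dseq_dsw c l : odd (Dseq (rpv c (dsw l))) = odd (Dseq (rpv c l)) (+) (dsw l != l).
Proof.
elim/seq_ind4: l c => [|x|x y|x y z|a b c' d r IH] c; try by rewrite /= ?eqxx ?addbF.
  rewrite /=; case: ifP => H; last by rewrite eqxx addbF.
  have Hzx : (z == x) = false by apply: size_neq_neq; rewrite eq_sym.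
  rewrite eqseq_cons Hzx /= addbT /rpv /= !negbK.
  apply: (@odd_flip _ _ (2 + 2 * size z < 2 + 2 * size x) (2 + 2 * size x < 2 + 2 * size z)).
    by symmetry; apply: Dseq_swap3 => //=; rewrite eqNb.
  by move: H; case: ltngtP => //= h; lia.
rewrite /=; case: ifP => H1.
  have Hzx : (c' == a) = false by apply: size_neq_neq; rewrite eq_sym.
  rewrite eqseq_cons Hzx /= addbT /rpv /= !negbK.
  apply: (@odd_flip _ _ (2 + 2 * size c' < 2 + 2 * size a) (2 + 2 * size a < 2 + 2 * size c')).
    by symmetry; apply: Dseq_swap3 => //=; rewrite eqNb.
  by move: H1; case: ltngtP => //= h; lia.
case: ifP => H2.
  have Hzx : (d == b) = false by apply: size_neq_neq; rewrite eq_sym.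
  rewrite !eqseq_cons Hzx eqxx /= addbT /rpv /= !negbK.
  rewrite (Dseq_cons (c, _)) [in RHS](Dseq_cons (c, _)).
  rewrite (cnt_perm _ (t := [:: (~~ c, 2 + 2 * size b), (c, 2 + 2 * size c'), (~~ c, 2 + 2 * size d) & map rp (vmid c r)])); last first.
    by apply/permP => p /=; lia.
  rewrite oddD [in RHS]oddD.
  have -> : odd (Dseq [:: (~~ c, 2 + 2 * size d), (c, 2 + 2 * size c'), (~~ c, 2 + 2 * size b) & map rp (vmid c r)]) = ~~ odd (Dseq [:: (~~ c, 2 + 2 * size b), (c, 2 + 2 * size c'), (~~ c, 2 + 2 * size d) & map rp (vmid c r)]).
    apply: (@odd_flip _ _ (2 + 2 * size d < 2 + 2 * size b) (2 + 2 * size b < 2 + 2 * size d)).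
      by symmetry; apply: Dseq_swap3 => //=; rewrite eqbN.
    by move: H2; case: ltngtP => //= h; lia.
  by case: (odd (cnt _ _)); case: (odd (Dseq _)).
rewrite !eqseq_cons !eqxx /= /rpv /= !negbK [in LHS]Dseq_cat4 [in RHS]Dseq_cat4.
rewrite (cross_perm _ (perm_map rp (perm_dsw c r))).
rewrite !oddD; move: (IH c); rewrite /rpv => ->.
by case: (odd (Dseq [:: _; _; _; _])); case: (dsw r != r); case: (odd (Dseq [seq rp i | i <- vmid c r])); case: (odd (\sum_(_ <- _) _)).
Qed.

Lemma Dseq_dsw_fix c l : dsw l == l -> ~~ odd (Dseq (rpv c l)).
Proof.
elim/seq_ind4: l c => [|x|x y|x y z|a b c' d r IH] c.
- by rewrite /rpv /= Dseq_nil.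
- by rewrite /rpv /= Dseq_cons Dseq_nil.
- by rewrite /rpv /= !Dseq_cons Dseq_nil /cnt /= eqbN.
- rewrite /=; case: ifP => H.
    have Hzx : (z == x) = false by apply: size_neq_neq; rewrite eq_sym.
    by rewrite eqseq_cons Hzx.
  move=> _; move/negbFE/eqP: H => H.
  by rewrite /rpv /= !Dseq_cons Dseq_nil /cnt /= !negbK eqbN eqNb eqxx H ltnn.
rewrite /=; case: ifP => H1.
  have Hzx : (c' == a) = false by apply: size_neq_neq; rewrite eq_sym.
  by rewrite eqseq_cons Hzx.
case: ifP => H2.
  have Hzx : (d == b) = false by apply: size_neq_neq; rewrite eq_sym.
  by rewrite !eqseq_cons Hzx eqxx.
rewrite !eqseq_cons !eqxx /= => Hr.
move/negbFE/eqP: H1 => H1; move/negbFE/eqP: H2 => H2.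
rewrite /rpv /= !negbK Dseq_cat4 !big_cons big_nil H1 H2.
rewrite !Dseq_cons Dseq_nil /cnt /= ?negbK ?eqbN ?eqNb !eqxx !ltnn /=.
move: (IH c Hr); rewrite /rpv; set D := Dseq _; set u := count _ _; set v := count _ _.
match goal with |- _ -> is_true (~~ odd ?X) => have -> : X = D + 2 * (u + v) by lia end.
by rewrite oddD oddM /= addbF.
Qed.

Fixpoint palify (l : seq (seq ptree)) : seq (seq ptree) :=
  match l with
  | x0 :: x1 :: x2 :: x3 :: r => x0 :: x1 :: rcons (rcons (palify r) x3) x2
  | _ => l
  end.

Lemma size_palify l : size (palify l) = size l.
Proof. by elim/seq_ind4: l => //= a b c d r IH; rewrite !size_rcons IH. Qed.

Lemma vmid_rcons c l y : vmid c (rcons l y) = rcons (vmid c l) (c (+) odd (size l), 2, y).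
Proof.
elim: l c => [|x l IH] c /=; first by rewrite addbF.
by rewrite IH; congr (_ :: rcons _ (_, _, _)); case: c; case: (odd (size l)).
Qed.

Lemma perm_palify c l : odd (size l) -> perm_eq (vmid c (palify l)) (vmid c l).
Proof.
elim/seq_ind4: l c => //= a b c' d r IH c; rewrite !negbK => Hr.
rewrite !vmid_rcons size_rcons /= size_palify Hr /=.
move/permP: (IH c Hr) => H; apply/permP => p /=.
rewrite -!cats1 !count_cat H /= addbT addbF; lia.
Qed.

Lemma palify_inj l l' : size l = size l' -> palify l = palify l' -> l = l'.
Proof.
elim/seq_ind4: l l' => [|x|x y|x y z|a b c d r IH] l'.
- by case: l'.
- by case: l' => [|? [|]].
- by case: l' => [|? [|? [|]]].
- by case: l' => [|? [|? [|? [|]]]].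
case: l' => [|a' [|b' [|c' [|d' r']]]] //= [Hs] [-> ->].
move/rcons_inj => [/rcons_inj [E ->] ->]; congr [:: _, _, _, _ & _].
exact: IH.
Qed.

Definition pal (X : eqType) (s : seq X) := rev s == s.

Lemma pal_cr (X : eqType) (x y : X) m : pal (x :: rcons m y) = (x == y) && pal m.
Proof.
rewrite /pal rev_cons rev_rcons rcons_cons eqseq_cons eqseq_rcons eq_sym.
by case: (x == y); rewrite ?andbT ?andbF.
Qed.

Lemma dsw_pal l : odd (size l) -> (dsw l == l) = pal (map size (palify l)).
Proof.
elim/seq_ind4: l => [|x|x y|x y z|a b c d r IH] //=.
- by move=> _; rewrite /pal /= !eqxx.
- move=> _; rewrite /pal /= !eqseq_cons eqxx andbT.
  case: ifP => H; last by move/negbFE: H => H; rewrite eqxx H eq_sym H.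
    have Hzx : (z == x) = false by apply: size_neq_neq; rewrite eq_sym.
  by rewrite eqseq_cons Hzx (negbTE H) /= !andbF.
rewrite !negbK => Hr.
rewrite !map_rcons -rcons_cons !pal_cr -IH //.
case: ifP => H1.
  have Hzx : (c == a) = false by apply: size_neq_neq; rewrite eq_sym.
  by rewrite eqseq_cons Hzx (negbTE H1).
case: ifP => H2.
  have Hzx : (d == b) = false by apply: size_neq_neq; rewrite eq_sym.
  by rewrite !eqseq_cons Hzx eqxx (negbTE H2) /= andbF.
move/negbFE: H1 => E1; move/negbFE: H2 => E2.
by rewrite E1 E2 !eqseq_cons !eqxx.
Qed.

Lemma count_col c l :
  count (fun z => z.1 == c) (rpv (~~ c) l) = (size l)./2 /\
  count (fun z => z.1 == c) (rpv c l) = uphalf (size l).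
Proof.
elim: l c => [|x l IH] c //=.
case: (IH c) => H1 H2; rewrite /rpv /= in H1 H2 *.
by rewrite negbK eqxx eqNb H1 H2 /= add1n.
Qed.

Lemma pal_rpv c l : odd (size l) -> pal (rpv c l) = pal (map size l).
Proof.
move=> Hl; have [n Hn] : exists n, size l <= n by exists (size l).
elim: n l c Hl Hn => [|n IH] l c Hl Hn; first by case: l Hl Hn.
case: l Hl Hn => [|x l] //=.
case/lastP: l => [|m y] /=; first by rewrite /pal /rpv /= !eqxx.
rewrite size_rcons /= negbK => Hm Hn.
rewrite /rpv /= vmid_rcons map_rcons -/(rpv _ _) map_rcons.
rewrite !pal_cr IH //; last by lia.
rewrite Hm xpair_eqE; case: c; rewrite /= ?eqxx /=; congr (_ && _);
  by apply/eqP/eqP => [|->] //; lia.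
Qed.

Lemma swK l : sw (sw l) = l.
Proof. by elim/seq_ind2: l => //= x y r ->. Qed.

Definition split3 (fs : seq (seq ptree)) : option (seq ptree * seq (seq ptree) * seq ptree) :=
  if fs is f0 :: y :: r then Some (f0, belast y r, last y r) else None.

Lemma split3_rcons f0 mid fl : split3 (f0 :: rcons mid fl) = Some (f0, mid, fl).
Proof. by case: mid => [|m ms] //=; rewrite belast_rcons last_rcons. Qed.

Lemma split3P fs : (split3 fs = None /\ size fs <= 1) \/
  exists f0 mid fl, fs = f0 :: rcons mid fl.
Proof.
case: fs => [|f0 [|y r]]; [by left|by left|right].
by exists f0, (belast y r), (last y r); rewrite -lastI.
Qed.

Lemma Dseq_cr x s y : Dseq (x :: rcons s y) =
  cnt x s + ((x.1 == y.1) && (y.2 < x.2)) + Dseq s + cntR y s.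
Proof.
rewrite Dseq_cons Dseq_rcons /cnt -cats1 count_cat /= -/(cnt x s); lia.
Qed.

Lemma all_even_rpv c l : all (fun z => ~~ odd z.2) (rpv c l).
Proof.
elim: l c => [|x l IH] c //=; apply/andP; split; last exact: IH.
by rewrite oddD oddM.
Qed.

Lemma cnt_cntR x s : odd x.2 -> all (fun z => ~~ odd z.2) s ->
  cnt x s + cntR x s = count (fun z => z.1 == x.1) s.
Proof.
move=> Hx; elim: s => [|z s IH] //= /andP [Hz Hs].
rewrite /cnt /cntR /= -/(cnt x s) -/(cntR x s).
have Hne : z.2 != x.2 by apply/eqP => E; move: Hz; rewrite E Hx.
rewrite eq_sym; case: (z.1 == x.1) => /=; last by rewrite IH.
move: Hne; case: ltngtP => //= _ _; rewrite -IH //; lia.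
Qed.

Lemma count_col_all (c : bool) (s : seq (bool * nat)) :
  count (fun z => z.1 == c) s + count (fun z => z.1 == ~~ c) s = size s.
Proof.
rewrite (@eq_count _ (fun z => z.1 == ~~ c) (predC (fun z : bool * nat => z.1 == c))) ?count_predC //.
by move=> z /=; case: z.1; case: c.
Qed.

Lemma rp_split c f0 mid fl : real_part (c, f0 :: rcons mid fl) =
  (c, 1 + 2 * size f0) :: rcons (rpv (~~ c) mid) (c (+) odd (size mid).+1, 1 + 2 * size fl).
Proof. by rewrite real_partE vl_split /= map_rcons. Qed.

Lemma ws_split c f0 mid fl : white_side (c, f0 :: rcons mid fl) = c (+) odd (size mid).+1.
Proof. by rewrite /white_side /nreal /real_col /= size_rcons. Qed.

Lemma nreal_split c f0 mid fl : nreal (c, f0 :: rcons mid fl) = (size mid).+2.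
Proof. by rewrite /nreal /= size_rcons. Qed.

Local Open Scope ring_scope.

Lemma sign_eq (a b : nat) : odd a = odd b -> (-1) ^+ a = (-1) ^+ b :> int.
Proof. by move=> H; rewrite -signr_odd H signr_odd. Qed.

Lemma sign_neq (a b : nat) : odd a = ~~ odd b -> (-1) ^+ a = - (-1) ^+ b :> int.
Proof. by move=> H; rewrite -signr_odd H -(signr_odd _ b); case: (odd b); rewrite /= ?opprK ?expr0 ?expr1. Qed.

Local Close Scope ring_scope.

Lemma Dseq_flip_even x y s s' : perm_eq s s' -> Dseq s = Dseq s' -> odd x.2 -> odd y.2 ->
  all (fun z => ~~ odd z.2) s -> y.1 = ~~ x.1 -> ~~ odd (size s) ->
  odd (Dseq (x :: rcons s y)) = odd (Dseq (y :: rcons s' x)).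
Proof.
move=> Hp HD Hx Hy Hs Hc Hev.
rewrite !Dseq_cr -HD -(cnt_perm _ Hp) -(cntR_perm _ Hp) Hc eqbN eqNb /=.
have E1 := cnt_cntR Hx Hs; have E2 := cnt_cntR Hy Hs.
have E3 := count_col_all x.1 s; rewrite -Hc in E3.
have E : (cnt x s + 0 + Dseq s + cntR y s) + (cnt y s + 0 + Dseq s + cntR x s) = size s + 2 * Dseq s by rewrite -E3 -E1 -E2; lia.
move: (congr1 odd E); rewrite oddD [in RHS]oddD oddM /= addbF (negbTE Hev).
move: (odd (cnt x s + 0 + Dseq s + cntR y s)) (odd (cnt y s + 0 + Dseq s + cntR x s)).
by case; case.
Qed.

Lemma Dseq_flip_ends x y s : odd x.2 -> odd y.2 -> all (fun z => ~~ odd z.2) s ->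
  x.1 = y.1 -> x.2 != y.2 ->
  odd (Dseq (x :: rcons s y)) = ~~ odd (Dseq (y :: rcons s x)).
Proof.
move=> Hx Hy Hs Hc Hne.
rewrite !Dseq_cr Hc eqxx /=.
have E1 := cnt_cntR Hx Hs; have E2 := cnt_cntR Hy Hs; rewrite Hc in E1.
set K := count _ s in E1 E2.
have E : ((cnt x s + (y.2 < x.2) + Dseq s + cntR y s) + (cnt y s + (x.2 < y.2) + Dseq s + cntR x s)
   = 1 + 2 * (K + Dseq s))%N.
  by move: Hne; case: ltngtP => // _ _; lia.
move: (congr1 odd E); rewrite oddD [in RHS]oddD oddM /=.
by move: (odd _) (odd _); case; case.
Qed.

Lemma Dseq_P3 x s : odd x.2 -> all (fun z => ~~ odd z.2) s ->
  Dseq (x :: rcons s x) = count (fun z => z.1 == x.1) s + Dseq s.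
Proof.
move=> Hx Hs; rewrite Dseq_cr ltnn andbF -(cnt_cntR Hx Hs); lia.
Qed.

Local Open Scope ring_scope.

Definition sigma (T : rtree) : int := if white_side T then 1 else -1.

Definition Jm (T : rtree) : rtree :=
  match split3 T.2 with
  | Some (f0, mid, fl) =>
      if odd (size mid) then (if size f0 != size fl then (T.1, fl :: rcons mid f0) else T)
      else (~~ T.1, fl :: rcons (sw mid) f0)
  | None => T
  end.

Definition P3 (T : rtree) : bool :=
  match split3 T.2 with
  | Some (f0, mid, fl) => odd (size mid) && (size f0 == size fl)
  | None => false
  end.

Definition Phi (T : rtree) : rtree :=
  match split3 T.2 with
  | Some (f0, mid, fl) =>
      if odd (size mid) && (size f0 == size fl) then (T.1, f0 :: rcons (dsw mid) fl) else T
  | None => T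
  end.

Definition Pim (T : rtree) : rtree :=
  match split3 T.2 with
  | Some (f0, mid, fl) =>
      if odd (size mid) && (size f0 == size fl) then (T.1, f0 :: rcons (palify mid) fl) else T
  | None => T
  end.

Lemma tree_cases (T : rtree) : (split3 T.2 = None /\ (size T.2 <= 1)%N) \/
  exists c f0 mid fl, T = (c, f0 :: rcons mid fl).
Proof.
case: T => c fs; case: (split3P fs) => [H|[f0 [mid [fl ->]]]]; first by left.
by right; exists c, f0, mid, fl.
Qed.

Lemma eps_split c f0 mid fl :
  eps (c, f0 :: rcons mid fl) = (-1) ^+ Dseq (real_part (c, f0 :: rcons mid fl)).
Proof. by []. Qed.

Lemma oddS_addb c n : c (+) odd n.+1 = ~~ (c (+) odd n).
Proof. by rewrite /= addbN. Qed.

Lemma JmK T : Jm (Jm T) = T.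
Proof.
case: (tree_cases T) => [[H _]|[c [f0 [mid [fl ->]]]]]; first by rewrite /Jm H H.
rewrite /Jm split3_rcons /=.
case: ifP => Ho.
  case: ifP => Hs; last by rewrite split3_rcons /= Ho Hs.
  by rewrite split3_rcons /= Ho eq_sym Hs.
by rewrite split3_rcons /= size_sw Ho negbK swK.
Qed.

Lemma perm_Jm T : perm_eq (vl T) (vl (Jm T)).
Proof.
case: (tree_cases T) => [[H _]|[c [f0 [mid [fl ->]]]]]; first by rewrite /Jm H.
rewrite /Jm split3_rcons /=.
case: ifP => Ho.
  case: ifP => Hs //.
  rewrite !vl_split /= Ho /=; apply/permP => p.
  by rewrite -!cats1 /= !count_cat /= addbF; lia.
rewrite !vl_split size_sw /= Ho /= negbK; apply/permP => p.
move/permP: (perm_sw c (negbT Ho)) => H.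
rewrite -!cats1 /= !count_cat H /= !addbT negbK; lia.
Qed.

Lemma size_rpv c l : size (rpv c l) = size l.
Proof. by elim: l c => //= x l IH c; rewrite IH. Qed.

Lemma Jm_w T : Jm T != T -> sigma (Jm T) * eps (Jm T) = - (sigma T * eps T).
Proof.
case: (tree_cases T) => [[H _]|[c [f0 [mid [fl ->]]]]]; first by rewrite /Jm H eqxx.
rewrite /Jm split3_rcons /=.
case: ifP => Ho.
  case: ifP => Hs; last by rewrite eqxx.
  move=> _; rewrite /sigma !ws_split !eps_split !rp_split /= Ho /= !addbF -mulrN; congr (_ * _).
  apply: sign_neq; apply: Dseq_flip_ends => //=.
  - by rewrite oddD oddM.
  - by rewrite oddD oddM.
  - exact: all_even_rpv.
  - by apply: contra Hs => /eqP H; apply/eqP; lia.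
move=> _; rewrite /sigma !ws_split !eps_split !rp_split /= size_sw Ho /= !addbT negbK.
have -> : (if ~~ c then 1 else -1) * (-1) ^+ Dseq ((c, 1 + 2 * size f0) :: rcons (rpv (~~ c) mid) (~~ c, 1 + 2 * size fl)) =
  - ((if c then 1 else -1) * (-1) ^+ Dseq ((~~ c, 1 + 2 * size fl) :: rcons (rpv c (sw mid)) (c, 1 + 2 * size f0))) :> int.
  rewrite (@sign_eq (Dseq ((c, 1 + 2 * size f0) :: rcons (rpv (~~ c) mid) (~~ c, 1 + 2 * size fl)))
     (Dseq ((~~ c, 1 + 2 * size fl) :: rcons (rpv c (sw mid)) (c, 1 + 2 * size f0)))).
    by case: c; rewrite ?mulN1r ?mul1r ?opprK.
  apply: Dseq_flip_even => //=.
  - by apply: perm_map; rewrite perm_sym; apply: perm_sw; rewrite Ho.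
  - by rewrite Dseq_sw ?Ho.
  - by rewrite oddD oddM.
  - by rewrite oddD oddM.
  - exact: all_even_rpv.
  - by rewrite size_rpv Ho.
by rewrite opprK.
Qed.

Definition wP (T : rtree) : int := if P3 T then sigma T * eps T else 0.
Definition wO (T : rtree) : int := if P3 T then sigma T * omega T else 0.

Lemma eps_P3 c f0 mid fl : odd (size mid) -> size f0 = size fl ->
  eps (c, f0 :: rcons mid fl) = (-1) ^+ ((size mid)./2 + Dseq (rpv (~~ c) mid)).
Proof.
move=> Ho Hs; rewrite eps_split rp_split /= Ho addbF -Hs Dseq_P3 //=.
- by case: (count_col c mid) => ->.
- by rewrite oddD oddM.
- exact: all_even_rpv.
Qed.

Lemma pal_rp c f0 mid fl : odd (size mid) -> size f0 = size fl ->
  pal (real_part (c, f0 :: rcons mid fl)) = pal (map size mid).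
Proof.
by move=> Ho Hs; rewrite rp_split /= Ho addbF -Hs pal_cr eqxx pal_rpv.
Qed.

Lemma omega_P3 c f0 mid fl : odd (size mid) -> size f0 = size fl ->
  omega (c, f0 :: rcons mid fl) = if pal (map size mid) then (-1) ^+ (size mid)./2 else 0.
Proof.
move=> Ho Hs; have := pal_rp c Ho Hs; rewrite /omega /pal => ->.
case: (rev _ == _) => //=.
rewrite nreal_split /real_col /= size_rcons /= addbF -signr_odd.
by case: c; case: (odd _).
Qed.

Lemma PhiK T : Phi (Phi T) = T.
Proof.
case: (tree_cases T) => [[H _]|[c [f0 [mid [fl ->]]]]]; first by rewrite /Phi H H.
rewrite /Phi split3_rcons /=.
case: ifP => H; last by rewrite split3_rcons /= H.
by rewrite split3_rcons /= size_dsw H dswK.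
Qed.

Lemma perm_Phi T : perm_eq (vl T) (vl (Phi T)).
Proof.
case: (tree_cases T) => [[H _]|[c [f0 [mid [fl ->]]]]]; first by rewrite /Phi H.
rewrite /Phi split3_rcons /=; case: ifP => H //.
rewrite !vl_split size_dsw; apply/permP => p.
move/permP: (perm_dsw (~~ c) mid) => E.
by rewrite -!cats1 /= !count_cat E.
Qed.

Lemma P3_split c f0 mid fl : P3 (c, f0 :: rcons mid fl) = odd (size mid) && (size f0 == size fl).
Proof. by rewrite /P3 split3_rcons. Qed.

Lemma Phi_w T : Phi T != T -> wP (Phi T) = - wP T.
Proof.
case: (tree_cases T) => [[H _]|[c [f0 [mid [fl ->]]]]]; first by rewrite /Phi H eqxx.
rewrite /Phi split3_rcons /=; case: ifP => H; last by rewrite eqxx.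
move: H => /andP [Ho /eqP Hs] Hne.
have Hd : dsw mid != mid.
  by apply: contra Hne => /eqP ->.
rewrite /wP !P3_split size_dsw Ho Hs eqxx /sigma !ws_split size_dsw.
rewrite !eps_P3 ?size_dsw // -mulrN; congr (_ * _).
apply: sign_neq; rewrite !oddD Dseq_dsw Hd addbT.
by case: (odd _); case: (odd _).
Qed.

Lemma P3_Pim T : P3 (Pim T) = P3 T.
Proof.
case: (tree_cases T) => [[H _]|[c [f0 [mid [fl ->]]]]]; first by rewrite /Pim H.
rewrite /Pim split3_rcons /=; case: ifP => H //.
by rewrite !P3_split size_palify.
Qed.

Lemma perm_Pim T : perm_eq (vl T) (vl (Pim T)).
Proof.
case: (tree_cases T) => [[H _]|[c [f0 [mid [fl ->]]]]]; first by rewrite /Pim H.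
rewrite /Pim split3_rcons /=; case: ifP => H //.
move: H => /andP [Ho _].
rewrite !vl_split size_palify; apply/permP => p.
move/permP: (perm_palify (~~ c) Ho) => E.
by rewrite -!cats1 /= !count_cat E.
Qed.

Lemma Pim_inj T T' : Pim T = Pim T' -> T = T'.
Proof.
have HP : forall T, P3 T -> exists c f0 mid fl, T = (c, f0 :: rcons mid fl) /\ odd (size mid) /\ size f0 = size fl
   /\ Pim T = (c, f0 :: rcons (palify mid) fl).
  move=> U; case: (tree_cases U) => [[H _]|[c [f0 [mid [fl ->]]]]]; first by rewrite /P3 H.
  rewrite P3_split => /andP [Ho /eqP Hs]; exists c, f0, mid, fl; do !split => //.
  by rewrite /Pim split3_rcons /= Ho Hs eqxx.
have HN : forall T, ~~ P3 T -> Pim T = T.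
  move=> U; case: (tree_cases U) => [[H _]|[c [f0 [mid [fl ->]]]]]; first by rewrite /Pim H.
  by rewrite P3_split /Pim split3_rcons /= => /negbTE ->.
case: (boolP (P3 T)) => HT; case: (boolP (P3 T')) => HT' E.
- move: E; case: (HP _ HT) => [c [f0 [mid [fl [-> [Ho [Hs ->]]]]]]].
  case: (HP _ HT') => [c' [f0' [mid' [fl' [-> [Ho' [Hs' ->]]]]]]].
  move=> [-> -> /rcons_inj [E3 ->]].
  by rewrite (palify_inj _ E3) // -(size_palify mid) E3 size_palify.
- by move: HT'; rewrite -P3_Pim -E P3_Pim HT.
- by move: HT; rewrite -P3_Pim E P3_Pim HT'.
- by rewrite -(HN _ HT) -(HN _ HT') E.
Qed.

Lemma fix_eq T : (if Phi T == T then wP T else 0) = wO (Pim T).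
Proof.
case: (tree_cases T) => [[H _]|[c [f0 [mid [fl ->]]]]].
  by rewrite /Phi /Pim /wP /wO /P3 H /= H; case: (T == T).
rewrite /Phi /Pim split3_rcons /=.
case: (boolP (odd (size mid) && (size f0 == size fl))) => H; last first.
  by rewrite eqxx /wP /wO P3_split (negbTE H).
move: H => /andP [Ho /eqP Hs].
have -> : ((c, f0 :: rcons (dsw mid) fl) == (c, f0 :: rcons mid fl)) = (dsw mid == mid).
  by rewrite xpair_eqE eqxx eqseq_cons eqxx eqseq_rcons eqxx andbT.
rewrite /wO /wP !P3_split size_palify Ho Hs eqxx /sigma !ws_split size_palify.
rewrite omega_P3 ?size_palify // -dsw_pal //.
case: ifP => Hd; last by rewrite mulr0.
rewrite eps_P3 //; congr (_ * _); apply: sign_eq.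
by rewrite oddD (negbTE (Dseq_dsw_fix (~~ c) Hd)) addbF.
Qed.

Lemma omega_one c f : omega (c, [:: f]) = 1.
Proof. by rewrite /omega /= eqxx. Qed.

Lemma eps_one c f : eps (c, [:: f]) = 1.
Proof. by rewrite /eps disordersE /real_part /= Dseq_cons Dseq_nil. Qed.

Lemma omega_notpal T : ~~ pal (real_part T) -> omega T = 0.
Proof. by rewrite /omega /pal => /negbTE ->. Qed.

Lemma decomp_eps T : valid_rtree T ->
  (if Jm T == T then sigma T * eps T else 0) = (if nreal T == 1%N then sigma T * omega T else 0) + wP T.
Proof.
case: (tree_cases T) => [[H Hs]|[c [f0 [mid [fl ->]]]]] Hv.
  move: H Hs Hv; case: T => c [|f [|? ?]] //= _ _ _.
  by rewrite /Jm /wP /P3 /= eqxx omega_one eps_one addr0.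
rewrite nreal_split /= add0r /wP P3_split /Jm split3_rcons /=.
case: (boolP (odd (size mid))) => Ho /=; last by rewrite xpair_eqE; clear Hv; case: c.
case: (boolP (size f0 != size fl)) => Hs /=.
  have Hf : (fl == f0) = false by apply: size_neq_neq; rewrite eq_sym.
  by rewrite xpair_eqE eqxx eqseq_cons Hf (negbTE Hs).
by rewrite eqxx (negbNE Hs).
Qed.

Lemma decomp_omega T : valid_rtree T ->
  sigma T * omega T = (if nreal T == 1%N then sigma T * omega T else 0) + wO T.
Proof.
case: (tree_cases T) => [[H Hs]|[c [f0 [mid [fl ->]]]]] Hv.
  move: H Hs Hv; case: T => c [|f [|? ?]] //= _ _ _.
  by rewrite /wO /P3 /= ?eqxx addr0.
rewrite nreal_split /= add0r /wO P3_split.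
case: ifP => H //.
rewrite omega_notpal ?mulr0 //.
rewrite rp_split pal_cr xpair_eqE.
case: (boolP (odd (size mid))) => Ho /=.
  move: H; rewrite Ho /= => /negbT Hs.
  have -> : ((1 + 2 * size f0)%N == (1 + 2 * size fl)%N) = false.
    by apply/negbTE; move: Hs; apply: contra => /eqP E; apply/eqP; lia.
  by rewrite andbF.
by rewrite (negbTE Ho); clear Hv; case: c.
Qed.

Lemma inv_sum (S : seq rtree) (C : pred rtree) (J : rtree -> rtree) (w : rtree -> int) :
  uniq S -> (forall T, (T \in S) = C T) -> (forall T, C T -> C (J T)) -> (forall T, J (J T) = T) ->
  (forall T, C T -> J T != T -> w (J T) = - w T) ->
  \sum_(T <- S) w T = \sum_(T <- S) (if J T == T then w T else 0).
Proof.
move=> uS HS HC JK Hw.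
have Hp : perm_eq (map J S) S.
  apply: uniq_perm; first by rewrite (map_inj_uniq (can_inj JK)).
    exact: uS.
  move=> T; apply/mapP/idP => [[U HU ->]|HT].
    by rewrite HS; apply: HC; rewrite -HS.
  by exists (J T); [rewrite HS; apply: HC; rewrite -HS | rewrite JK].
have E1 : \sum_(T <- S) w T = \sum_(T <- S) w (J T) by rewrite -(perm_big _ Hp) big_map.
have E2 : \sum_(T <- S) w T + \sum_(T <- S) w (J T) =
   \sum_(T <- S) (if J T == T then w T else 0) + \sum_(T <- S) (if J T == T then w T else 0).
  rewrite -!big_split /=; apply: eq_big_seq => T; rewrite HS => HT.
  case: eqP => [->|/eqP Hne] //; by rewrite Hw // addrN addr0.
move: E2; rewrite -E1; set a := \sum_(T <- S) w T; set b := \sum_(T <- S) _.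
move=> E; lia.
Qed.

Lemma bij_sum (S : seq rtree) (C : pred rtree) (f : rtree -> rtree) (h : rtree -> int) :
  uniq S -> (forall T, (T \in S) = C T) -> injective f -> (forall T, C T -> C (f T)) ->
  \sum_(T <- S) h (f T) = \sum_(T <- S) h T.
Proof.
move=> uS HS finj HC.
have uM : uniq (map f S) by rewrite (map_inj_uniq finj).
have sub : {subset map f S <= S}.
  by move=> T /mapP [U HU ->]; rewrite HS; apply: HC; rewrite -HS.
have [_ Heq] : ((size (map f S) = size S) * (map f S =i S))%type by apply: uniq_min_size => //; rewrite size_map.
have Hp : perm_eq (map f S) S by apply: uniq_perm.
by rewrite -[RHS](perm_big _ Hp) big_map.
Qed.

Lemma size_vl T : size (vl T) = nreal T.
Proof. by rewrite /vl size_map size_iota. Qed.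

Unset Implicit Arguments.

Theorem lemma3p12 (n : nat) (Lw Lb : seq nat) (sW sB : seq rtree) :
  (0 < n)%N -> is_partition n Lw -> is_partition n Lb ->
  enumerates sW (inW Lw Lb) -> enumerates sB (inB Lw Lb) ->
  \sum_(T <- sW) eps T - \sum_(T <- sB) eps T =
  \sum_(T <- sW) omega T - \sum_(T <- sB) omega T.
Proof.
move=> _ _ _ [uW memW] [uB memB].
pose S := sW ++ sB.
pose C := fun T => [&& valid_rtree T, perm_eq (degs_of true T) Lw & perm_eq (degs_of false T) Lb].
have memS : forall T, (T \in S) = C T.
  move=> T; rewrite mem_cat memW memB /inW /inB /C.
  by case: (valid_rtree T); case: (white_side T); case: (perm_eq _ Lw); case: (perm_eq _ Lb).
have uS : uniq S.
  rewrite cat_uniq uW uB /= andbT; apply/hasPn => T; rewrite memB memW /inW /inB.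
  by case/and4P => _ Hw _ _; apply/negP => /and4P [_ Hw' _ _]; rewrite Hw' in Hw.
have Cvalid : forall T, C T -> valid_rtree T by move=> T /and3P [].
have Cperm : forall T T', perm_eq (vl T) (vl T') -> C T -> C T'.
  move=> T T' H /and3P [H0 H1 H2]; apply/and3P; split.
  - by move: H0; rewrite /valid_rtree -/(nreal T) -/(nreal T') -!size_vl (perm_size H).
  - have Hs : perm_eq (vl T') (vl T) by rewrite perm_sym.
    exact: perm_trans (perm_vl_degs true Hs) H1.
  - have Hs : perm_eq (vl T') (vl T) by rewrite perm_sym.
    exact: perm_trans (perm_vl_degs false Hs) H2.
suff Main : \sum_(T <- S) sigma T * eps T = \sum_(T <- S) sigma T * omega T.
  have HW : forall F : rtree -> int, \sum_(T <- sW) sigma T * F T = \sum_(T <- sW) F T.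
    move=> F; apply: eq_big_seq => T; rewrite memW /inW => /and4P [_ Hw _ _].
    by rewrite /sigma Hw mul1r.
  have HB : forall F : rtree -> int, \sum_(T <- sB) sigma T * F T = - \sum_(T <- sB) F T.
    move=> F; rewrite -sumrN; apply: eq_big_seq => T; rewrite memB /inB => /and4P [_ Hw _ _].
    by rewrite /sigma (negbTE Hw) mulN1r.
  by move: Main; rewrite !big_cat /= !HW !HB.
rewrite (@inv_sum S C Jm) //; last first.
- by move=> T _; apply: Jm_w.
- exact: JmK.
- by move=> T; apply: Cperm; apply: perm_Jm.
rewrite (eq_big_seq (fun T => (if nreal T == 1%N then sigma T * omega T else 0) + wP T)); last first.
  by move=> T; rewrite memS => HT; apply: decomp_eps; apply: Cvalid.
rewrite [RHS](eq_big_seq (fun T => (if nreal T == 1%N then sigma T * omega T else 0) + wO T)); last first.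
  by move=> T; rewrite memS => HT; apply: decomp_omega; apply: Cvalid.
rewrite !big_split /=; congr (_ + _).
rewrite (@inv_sum S C Phi) //; last first.
- by move=> T _; apply: Phi_w.
- exact: PhiK.
- by move=> T; apply: Cperm; apply: perm_Phi.
rewrite (eq_big_seq (fun T => wO (Pim T))); last by move=> T _; apply: fix_eq.
apply: (@bij_sum S C) => //.
- by move=> T T'; apply: Pim_inj.
- by move=> T; apply: Cperm; apply: perm_Pim.
Qed.
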